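(* In the setting of the context, let $L=\bigoplus_{i=0}^{r+1}\mathbb ZE_i$, let $L^*=\mathrm{Hom}_{\mathbb Z}(L,\mathbb Z)$ with dual basis $E_0^*,\dots,E_{r+1}^*$, for $i=1,\dots,r$ let $E_i^\vee\in L^*$ be the functional $C\mapsto E_i\cdot C$, and let $\mathbb E\le L^*$ be the subgroup generated by $E_1^\vee,\dots,E_r^\vee$. Then the homomorphism $\nu\colon L^*\to\mathbb Z^2$ defined by $E_i^*\mapsto\nu_i$ $(0\le i\le r+1)$ is surjective with kernel $\mathbb E$.
   Context: $R$ is a two-dimensional normal noetherian excellent Hensel local domain with residue field $\kappa$, having a rational minimal resolution $f\colon Y\to\operatorname{Spec}R$ whose exceptional locus is a chain $E_1,\dots,E_r$ of curves $E_i\simeq\mathbb P^1_\kappa$, with $E_i\cap E_{i+1}$ a single $\kappa$-rational point and no other intersections. $E_0,E_{r+1}\subset Y$ are irreducible non-exceptional curves with $E_0\cdot E_1=1$, $E_0\cdot E_j=0$ for $2\le j\le r$, $E_{r+1}\cdot E_r=1$, $E_{r+1}\cdot E_j=0$ for $1\le j\le r-1$. Put $m_i=-E_i^2$, $\nu_0=(0,1)$, $\nu_1=(1,0)$, $\nu_{i+1}=m_i\nu_i-\nu_{i-1}$ for $i=1,\dots,r$. *)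

(* Defs.v *)
From HB Require Import structures.
From mathcomp Require Import all_boot all_order all_algebra.
Set Implicit Arguments. Unset Strict Implicit. Unset Printing Implicit Defensive.
Import Order.TTheory GRing.Theory Num.Theory.
Local Open Scope ring_scope.

(* The curves E_0, ..., E_{r+1} are indexed by 'I_(r.+2); an intersection
   form on L = (+)_{i=0}^{r+1} Z E_i is given by its Gram matrix
   I : 'M[int]_(r.+2), I i j = E_i . E_j.
   L^* = Hom(L, Z) is identified with 'rV[int]_(r.+2) through the dual basis:
   phi corresponds to the row (phi(E_j))_j, i.e. phi = sum_j phi(E_j) E_j^*. *)

Definition mult (r : nat) (I : 'M[int]_(r.+2)) (i : nat) : int :=
  - I (inord i) (inord i).

(* pairs (nu_n, nu_{n+1}) with nu_0 = (0,1), nu_1 = (1,0),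
   nu_{i+1} = m_i nu_i - nu_{i-1} *)
Fixpoint nu_pair (m : nat -> int) (n : nat) : 'rV[int]_2 * 'rV[int]_2 :=
  match n with
  | 0 => (\row_(k < 2) (if k == 0%N :> nat then 0 else 1),
          \row_(k < 2) (if k == 0%N :> nat then 1 else 0))
  | n'.+1 => let p := nu_pair m n' in (p.2, m n'.+1 *: p.2 - p.1)
  end.

Definition nu (m : nat -> int) (n : nat) : 'rV[int]_2 := (nu_pair m n).1.

Definition Edual (r : nat) (I : 'M[int]_(r.+2)) (i : nat) : 'rV[int]_(r.+2) :=
  \row_(j < r.+2) I (inord i) j.

Definition nuhom (r : nat) (I : 'M[int]_(r.+2)) (phi : 'rV[int]_(r.+2)) : 'rV[int]_2 :=
  \sum_(j < r.+2) phi 0 j *: nu (mult I) j.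

(* Main.v *)
Require Import Defs.
From HB Require Import structures.
From mathcomp Require Import all_boot all_order all_algebra zify ring.
Import Order.TTheory GRing.Theory Num.Theory.
Local Open Scope ring_scope.

Definition ev (n k : nat) : 'rV[int]_n := \row_(j < n) ((j == k :> nat)%:R : int).

Lemma nu_rec m n : nu m n.+2 = m n.+1 *: nu m n.+1 - nu m n.
Proof. by []. Qed.

Lemma nuhomD r I a x y : nuhom I (a *: x + y) = a *: nuhom I x + nuhom I (r:=r) y.
Proof.
rewrite /nuhom scaler_sumr -big_split /=; apply: eq_bigr => j _.
by rewrite !mxE scalerDl scalerA.
Qed.

Lemma nuhom0 r I : nuhom (r:=r) I 0 = 0.
Proof. by rewrite /nuhom big1 // => j _; rewrite mxE scale0r. Qed.

Lemma nuhomA r I x y : nuhom I (x + y) = nuhom I x + nuhom (r:=r) I y.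
Proof. by have := @nuhomD r I 1 x y; rewrite !scale1r. Qed.

Lemma nuhomZ r I a x : nuhom I (a *: x) = a *: nuhom (r:=r) I x.
Proof. by have := @nuhomD r I a x 0; rewrite !addr0 nuhom0 addr0. Qed.

Lemma nuhom_sum r I (s : seq nat) (P : pred nat) (F : nat -> 'rV[int]_(r.+2)) :
  nuhom I (\sum_(i <- s | P i) F i) = \sum_(i <- s | P i) nuhom I (F i).
Proof.
elim: s => [|a s IH]; first by rewrite !big_nil nuhom0.
rewrite !big_cons; case: (P a); last exact: IH.
by have := @nuhomD r I 1 (F a) (\sum_(j <- s | P j) F j); rewrite !scale1r IH.
Qed.

Lemma nuhom_ev r I k : (k < r.+2)%N -> nuhom I (ev r.+2 k) = nu (mult I) k.
Proof.
move=> hk; rewrite /nuhom (bigD1 (Ordinal hk)) //= big1 ?addr0.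
  by rewrite mxE eqxx scale1r.
move=> j hj; rewrite mxE; case: eqP => [e|]; last by rewrite scale0r.
by case/eqP: hj; apply: val_inj.
Qed.

Section Main.
Variables (r : nat) (I : 'M[int]_(r.+2)).
Hypothesis hsym : forall i j : 'I_(r.+2), I i j = I j i.
Hypothesis hchain : forall i j : 'I_(r.+2), (1 <= i <= r)%N -> (1 <= j <= r)%N -> i != j ->
      I i j = (if (i == j.+1 :> nat) || (j == i.+1 :> nat) then 1 else 0).
Hypothesis hE0 : forall j : 'I_(r.+2), (1 <= j <= r)%N ->
      I (inord 0) j = (if j == 1%N :> nat then 1 else 0).
Hypothesis hEr1 : forall j : 'I_(r.+2), (1 <= j <= r)%N ->
      I (inord r.+1) j = (if j == r :> nat then 1 else 0).

Lemma Edual_ev i : (1 <= i <= r)%N ->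
  Edual I i = ev r.+2 i.-1 + ev r.+2 i.+1 + I (inord i) (inord i) *: ev r.+2 i.
Proof.
move=> hi; have hir : (i < r.+2)%N by lia.
apply/rowP => j; rewrite !mxE.
have ii : (inord i : 'I_(r.+2)) = i :> nat by rewrite inordK.
case: (eqVneq (j : nat) i) => [ji|nji].
  have -> : j = inord i by apply: val_inj; rewrite /= ii.
  rewrite ii; have -> : (i == i.-1) = false by apply/eqP; lia.
  have -> : (i == i.+1) = false by apply/eqP; lia.
  by rewrite add0r mulr1.
rewrite mulr0 addr0.
have [j0|jn0] := eqVneq (j : nat) 0%N.
  have -> : j = inord 0 by apply: val_inj; rewrite /= inordK.
  rewrite hsym hE0 ii //; rewrite inordK //.
  case: (eqVneq i 1%N) => [->|i1] //.
  have -> : (0 == i.-1)%N = false by apply/eqP; lia.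
  by [].
have [jr|jnr] := eqVneq (j : nat) r.+1.
  have -> : j = inord r.+1 by apply: val_inj; rewrite /= inordK.
  rewrite hsym hEr1 ii //; rewrite inordK //.
  have -> : (r.+1 == i.-1)%N = false by apply/eqP; lia.
  case: (eqVneq i r) => [->|ir]; first by rewrite eqxx.
  have -> : (r.+1 == i.+1)%N = false by apply/eqP; lia.
  by [].
have hj : (1 <= j <= r)%N by have := ltn_ord j; lia.
rewrite hchain ?ii //; last by apply/eqP => e; move/eqP: nji; rewrite -e ii.
case: (eqVneq (j : nat) i.-1) => [e|ne].
  have -> : (i == j.+1 :> nat) by apply/eqP; lia.
  have -> : (j == i.+1 :> nat) = false by apply/eqP; lia.
  by [].
case: (eqVneq (j : nat) i.+1) => [e|ne2].
  by rewrite orbT.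
have -> : (i == j.+1 :> nat) = false by apply/eqP; lia.
by [].
Qed.

Lemma nuhom_Edual i : (1 <= i <= r)%N -> nuhom I (Edual I i) = 0.
Proof.
move=> hi; rewrite Edual_ev // !nuhomA nuhomZ !nuhom_ev; try lia.
case: i hi => [|i] hi //=.
by rewrite nu_rec /mult scaleNr addrC addrA -opprD subrr.
Qed.

Lemma ker_step k : (k <= r)%N -> forall phi : 'rV[int]_(r.+2),
  (forall j : 'I_(r.+2), (k.+2 <= j)%N -> phi 0 j = 0) -> nuhom I phi = 0 ->
  exists c : nat -> int, phi = \sum_(1 <= i < k.+1) c i *: Edual I i.
Proof.
elim: k => [|k IH] hk phi hsupp hnu.
  exists (fun _ => 0); rewrite big_geq //.
  have dec : phi = phi 0 (inord 0) *: ev r.+2 0 + phi 0 (inord 1) *: ev r.+2 1.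
    apply/rowP => j; rewrite !mxE.
    case: j => [[|[|j]] hj] /=.
    - by rewrite mulr1 mulr0 addr0; congr (phi 0 _); apply: val_inj; rewrite /= inordK.
    - by rewrite mulr1 mulr0 add0r; congr (phi 0 _); apply: val_inj; rewrite /= inordK.
    - by rewrite !mulr0 addr0 hsupp.
  move: hnu; rewrite dec nuhomA !nuhomZ !nuhom_ev // => h.
  have h0 := congr1 (fun v : 'rV[int]_2 => v 0 0) h.
  have h1 := congr1 (fun v : 'rV[int]_2 => v 0 1) h.
  move: h0 h1; rewrite /= !mxE /=.
  rewrite !mulr0 !mulr1 !addr0 !add0r => -> ->.
  by rewrite !scale0r addr0.
set a := phi 0 (inord k.+2).
set psi := phi + (- a) *: Edual I k.+1.
have hk1 : (1 <= k.+1 <= r)%N by lia.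
have [c hc] : exists c : nat -> int, psi = \sum_(1 <= i < k.+1) c i *: Edual I i.
  apply: IH; first lia.
    move=> j hj; rewrite /psi Edual_ev // !mxE /=.
    case: (eqVneq (j : nat) k.+2) => [e|ne].
      have -> : (j == k :> nat) = false by apply/eqP; lia.
      have -> : (j == k.+1 :> nat) = false by apply/eqP; lia.
      rewrite /a mulr0 !addr0 add0r mulr1.
      have -> : j = inord k.+2 by apply: val_inj; rewrite /= inordK //; lia.
      by rewrite subrr.
    have -> : (j == k :> nat) = false by apply/eqP; lia.
    have -> : (j == k.+1 :> nat) = false by apply/eqP; lia.
    by rewrite hsupp ?mulr0 ?addr0 //; lia.
  by rewrite /psi nuhomA nuhomZ nuhom_Edual // hnu scaler0 addr0.
exists (fun i => if i == k.+1 then a else c i).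
rewrite big_nat_recr //= eqxx.
have -> : phi = psi + a *: Edual I k.+1 by rewrite /psi scaleNr addrNK.
rewrite hc; congr (_ + _); apply: eq_big_nat => i hi.
by have -> : (i == k.+1) = false by apply/eqP; lia.
Qed.

End Main.

Theorem proposition4p4 (r : nat) (I : 'M[int]_(r.+2))
  (hr : (1 <= r)%N)
  (* intersection pairing is symmetric *)
  (hsym : forall i j : 'I_(r.+2), I i j = I j i)
  (* chain E_1,...,E_r: E_i . E_{i+1} = 1, no other intersections *)
  (hchain : forall i j : 'I_(r.+2), (1 <= i <= r)%N -> (1 <= j <= r)%N -> i != j ->
      I i j = (if (i == j.+1 :> nat) || (j == i.+1 :> nat) then 1 else 0))
  (* E_0 . E_1 = 1, E_0 . E_j = 0 for 2 <= j <= r *)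
  (hE0 : forall j : 'I_(r.+2), (1 <= j <= r)%N ->
      I (inord 0) j = (if j == 1%N :> nat then 1 else 0))
  (* E_{r+1} . E_r = 1, E_{r+1} . E_j = 0 for 1 <= j <= r-1 *)
  (hEr1 : forall j : 'I_(r.+2), (1 <= j <= r)%N ->
      I (inord r.+1) j = (if j == r :> nat then 1 else 0))
  (* the exceptional intersection matrix is negative definite *)
  (hnegdef : forall x : 'rV[int]_(r.+2),
      x 0 (inord 0) = 0 -> x 0 (inord r.+1) = 0 -> x != 0 ->
      (x *m I *m x^T) 0 0 < 0) :
  (forall v : 'rV[int]_2, exists phi : 'rV[int]_(r.+2), nuhom I phi = v) /\
  (forall phi : 'rV[int]_(r.+2),
      nuhom I phi = 0 <->
      exists c : nat -> int, phi = \sum_(1 <= i < r.+1) c i *: Edual I i).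
Proof.
split.
  move=> v; exists (v 0 1 *: ev r.+2 0 + v 0 0 *: ev r.+2 1).
  rewrite nuhomA !nuhomZ !nuhom_ev //.
  apply/rowP => k; rewrite !mxE; case: k => [[|[|k]] hk] //=.
  - by rewrite mulr0 mulr1 add0r; congr (v 0 _); apply: val_inj.
  - by rewrite mulr0 mulr1 addr0; congr (v 0 _); apply: val_inj.
move=> phi; split.
  move=> h; apply: (@ker_step r I hsym hchain hE0 hEr1 r (leqnn r) phi _ h) => j hj.
  by have := ltn_ord j; lia.
case=> c ->; rewrite nuhom_sum big_nat big1 // => i hi.
by rewrite nuhomZ (@nuhom_Edual r I hsym hchain hE0 hEr1) ?scaler0 //; lia.
Qed.
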